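(* Let $\mathcal{G}=(V,E)$ be a connected hypergraph with $n>2$ vertices. Then $$\lambda_n(L_{\mathcal{G}})\ge\min\left\{\frac{d_{i_1}+d_{i_2}+\dots+d_{i_{|e|}}-|e|}{|e|}:\ e=\{i_1,\dots,i_{|e|}\}\in E\right\}.$$
   Context: A hypergraph $\mathcal{G}=(V,E)$ has a finite vertex set $V$ and a set $E$ of subsets of $V$ (edges), each of cardinality at least $2$. The degree $d_i$ is the number of edges containing $i$. The Laplacian $L_{\mathcal{G}}$ has $(L_{\mathcal{G}})_{ii}=d_i$ and $(L_{\mathcal{G}})_{ij}=-\sum_{e\in E,\, i,j\in e}\frac{1}{|e|-1}$ for $i\ne j$; $\lambda_n(L_{\mathcal{G}})$ is its largest eigenvalue. *)

(* Defs.v *)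
From HB Require Import structures.
From mathcomp Require Import all_boot all_order all_algebra.
From mathcomp Require Import reals.
Set Implicit Arguments. Unset Strict Implicit. Unset Printing Implicit Defensive.
Import Order.TTheory GRing.Theory Num.Theory.
Local Open Scope ring_scope.

Definition is_hypergraph (n : nat) (E : {set {set 'I_n}}) : Prop :=
  forall e, e \in E -> (2 <= #|e|)%N.

Definition hdeg (n : nat) (E : {set {set 'I_n}}) (i : 'I_n) : nat :=
  #|[set e in E | i \in e]|.

Definition hadj (n : nat) (E : {set {set 'I_n}}) : rel 'I_n :=
  fun i j => [exists e in E, (i \in e) && (j \in e)].

Definition hconnected (n : nat) (E : {set {set 'I_n}}) : Prop :=
  forall i j : 'I_n, connect (hadj E) i j.

Definition hLaplacian (R : realType) (n : nat) (E : {set {set 'I_n}}) : 'M[R]_n :=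
  \matrix_(i, j)
    if i == j then (hdeg E i)%:R
    else - \sum_(e in E | (i \in e) && (j \in e)) ((#|e|.-1)%:R)^-1.

Definition largest_eigenvalue (R : realType) (n : nat) (A : 'M[R]_n) (lam : R) : Prop :=
  eigenvalue A lam /\ (forall mu, eigenvalue A mu -> mu <= lam).

Definition edge_min (R : realType) (n : nat) (E : {set {set 'I_n}})
    (f : {set 'I_n} -> R) : R :=
  match [pick e in E] with
  | Some e0 => \big[Num.min/f e0]_(e in E) f e
  | None => 0
  end.

Definition edge_quantity (R : realType) (n : nat) (E : {set {set 'I_n}})
    (e : {set 'I_n}) : R :=
  ((\sum_(i in e) (hdeg E i)%:R) - #|e|%:R) / #|e|%:R.

(* Main.v *)
Require Import Defs.
From HB Require Import structures.
From mathcomp Require Import all_boot all_order all_algebra.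
From mathcomp Require Import reals.
From mathcomp Require Import complex spectral sesquilinear.
Import Order.TTheory GRing.Theory Num.Theory.
Local Open Scope ring_scope.

Section Aux.
Variables (R : realType) (n : nat) (E : {set {set 'I_n}}).

Local Notation toC := (real_complex R).
Local Notation A := (hLaplacian R E).
Local Notation AC := (map_mx toC A).

Lemma toC_real (x : R) : toC x \is Num.real.
Proof. by apply/complex_realP; exists x. Qed.

Lemma AC_herm : AC \is hermsymmx.
Proof.
rewrite is_hermitianmxE expr0 scale1r; apply/eqP.
apply/matrixP => i j; rewrite !mxE conj_Creal ?toC_real //.
congr toC; rewrite eq_sym; case: eqP => [->//|_].
by congr (- _); apply: eq_bigl => e; rewrite [(i \in e) && _]andbC.
Qed.

End Aux.

Theorem corollary5 (R : realType) (n : nat) (E : {set {set 'I_n}}) :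
  is_hypergraph E -> hconnected E -> (2 < n)%N ->
  exists lam : R, largest_eigenvalue (hLaplacian R E) lam /\
    edge_min E (edge_quantity R E) <= lam.
Proof.
move=> hyp _ n2.
have i0 : 'I_n by exists 0%N; apply: leq_trans n2.
set A := hLaplacian R E.
set AC := map_mx (real_complex R) A.
set P := spectralmx AC.
set X := spectral_diag AC.
have hAC : AC = invmx P *m diag_mx X *m P.
  by apply/orthomx_spectralP/hermitian_normalmx/AC_herm.
have Pu : P \is unitarymx by apply: spectral_unitarymx.
have Punit : P \in unitmx by apply: spectral_unit.
have Xr : forall k, X 0 k = (complex.Re (X 0 k))%:C%C.
  move=> k; rewrite RRe_real //.
  by have /mxOverP := hermitian_spectral_diag_real (@AC_herm R n E); apply.
pose k0 := Order.arg_max i0 (fun _ => true) (fun k => complex.Re (X 0 k)).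
have Hk0 : forall k, complex.Re (X 0 k) <= complex.Re (X 0 k0).
  rewrite /k0; case: arg_maxP => // k _ Hk j; exact: Hk.
exists (complex.Re (X 0 k0)); split; first split.
- rewrite -(eigenvalue_map (real_complex R)).
  suff: eigenvalue AC (X 0 k0) by rewrite {1}Xr.
  apply/eigenvalueP; exists (delta_mx 0 k0 *m P).
    rewrite hAC !mulmxA -(mulmxA _ P) mulmxV // mulmx1.
    rewrite scalemxAl; congr (mulmx _ P); apply/matrixP => a b; rewrite !mxE.
    rewrite (bigD1 k0) //= big1 ?addr0; last first.
      by move=> l /negbTE hl; rewrite !mxE hl andbF mul0r.
    rewrite ord1 [in X in X * _]mxE !mxE !eqxx /= mul1r eq_sym mulr_natr; reflexivity.
  apply/negP => /eqP h.
  have := congr1 (mulmx^~ (invmx P)) h; rewrite /= mulmxK // mul0mx.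
  move=> /matrixP /(_ 0 k0); rewrite !mxE !eqxx /=.
  by move/eqP; rewrite oner_eq0.
- move=> mu; rewrite -(eigenvalue_map (real_complex R)).
  case/eigenvalueP => v hv vn0.
  set w := v *m invmx P.
  have hw : w *m diag_mx X = mu%:C%C *: w.
    apply: (can_inj (mulmxK Punit)) => /=.
    rewrite -scalemxAl /w mulmxKV // -hv -/AC hAC !mulmxA; reflexivity.
  have wn0 : w != 0.
    apply: contra vn0 => /eqP w0; by rewrite -(mulmxKV Punit v) -/w w0 mul0mx.
  case/matrix0Pn: wn0 => a [k hk]; rewrite ord1 in hk.
  clearbody w.
  move: (hw) => /matrixP /(_ 0 k); rewrite !mxE.
  rewrite (bigD1 k) //= big1 ?addr0; last first.
    by move=> l /negbTE hl; rewrite !mxE hl mulr0n mulr0.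
  rewrite !mxE eqxx mulr1n mulrC => /(mulIf hk) hX.
  have -> : mu = complex.Re (X 0 k) by rewrite hX.
  exact: Hk0.
- set lam := complex.Re (X 0 k0).
  have hdeg_le : forall j, (hdeg E j)%:R <= lam.
    move=> j; rewrite -(@lecR R).
    have -> : ((hdeg E j)%:R)%:C%C = AC j j by rewrite !mxE eqxx.
    rewrite hAC !mxE.
    have -> : lam%:C%C = \sum_k invmx P j k * P k j * lam%:C%C.
      rewrite -mulr_suml.
      have := mulVmx Punit; move/matrixP/(_ j j); rewrite !mxE eqxx mulr1n => ->.
      by rewrite mul1r.
    apply: ler_sum => k _; rewrite !mxE.
    rewrite (bigD1 k) //= big1 ?addr0; last first.
      by move=> l /negbTE hl; rewrite !mxE hl mulr0n mulr0.
    rewrite !mxE eqxx mulr1n mulrAC.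
    apply: ler_wpM2l.
      rewrite invmx_unitary // !mxE mulrC; exact: mul_conjC_ge0.
    by rewrite Xr lecR; apply: Hk0.
  rewrite /edge_min; case: pickP => [e0 He0|_]; last first.
    exact: le_trans (ler0n _ _) (hdeg_le i0).
  apply: (@le_trans _ _ (edge_quantity R E e0)).
    by elim/big_rec: _ => // e x _ hx; rewrite ge_min hx orbT.
  have e0pos : (0 < #|e0|)%N by apply: leq_trans (hyp _ He0).
  rewrite /edge_quantity ler_pdivrMr ?ltr0n //.
  apply: (@le_trans _ _ (\sum_(i in e0) (hdeg E i)%:R)).
    by rewrite lerBlDr lerDl.
  rewrite mulr_natr -sumr_const; apply: ler_sum => i _; exact: hdeg_le.
Qed.
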